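(* Let $\mathsf G=(\mathsf V,\mathsf E)$ be a finite connected graph without loops or multiple edges, with discrete Laplacian $\mathcal L=\mathcal I\mathcal I^T$. Then there exists some $p\in(2,\infty)$ such that the semigroup $(e^{-t\mathcal L^2})_{t\ge0}$ is $\ell^p$-contractive, i.e. $\|e^{-t\mathcal L^2}f\|_{\ell^p(\mathsf V)}\le\|f\|_{\ell^p(\mathsf V)}$ for all $t\ge0$ and all $f$.
   Context: $V=|\mathsf V|$ and functions on the vertices are vectors in $\mathbb C^V$. After fixing an arbitrary orientation of the edges, the incidence matrix $\mathcal I\in\mathbb R^{V\times E}$ has entries $\iota_{\mathsf v\mathsf e}=-1$ if $\mathsf v$ is the initial endpoint of $\mathsf e$, $+1$ if $\mathsf v$ is the terminal endpoint of $\mathsf e$, and $0$ otherwise; $\mathcal L=\mathcal I\mathcal I^T$. *)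

(* Defs.v *)
From HB Require Import structures.
From mathcomp Require Import all_boot all_order all_algebra.
From mathcomp Require Import all_classical all_reals all_analysis.
From mathcomp Require Import complex.

Set Implicit Arguments.
Unset Strict Implicit.
Unset Printing Implicit Defensive.

Import Order.TTheory GRing.Theory Num.Theory numFieldNormedType.Exports.
Local Open Scope ring_scope.

Definition simple_graph (n : nat) (adj : rel 'I_n) : Prop :=
  irreflexive adj /\ symmetric adj.

Definition graph_connected (n : nat) (adj : rel 'I_n) : Prop :=
  forall x y : 'I_n, connect adj x y.

(* Edges, with a fixed orientation: the edge {x,y} with x < y is
   oriented from x (initial) to y (terminal). *)
Definition edge_type (n : nat) (adj : rel 'I_n) :=
  {p : 'I_n * 'I_n | adj p.1 p.2 && (p.1 < p.2)%N}.

Definition incidence (R : pzRingType) (n : nat) (adj : rel 'I_n)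
    (v : 'I_n) (e : edge_type adj) : R :=
  if v == (val e).1 then -1 else if v == (val e).2 then 1 else 0.

(* Discrete Laplacian L = I I^T, written entrywise:
   L_{v w} = \sum_e iota_{v e} iota_{w e}. *)
Definition laplacian (R : pzRingType) (n : nat) (adj : rel 'I_n) : 'M[R]_n :=
  \matrix_(v, w) \sum_(e : edge_type adj)
      incidence R v e * incidence R w e.

Definition expmx (R : realType) (n : nat) (A : 'M[R]_n) : 'M[R]_n :=
  \matrix_(i, j) limn ((series (fun k : nat => (A ^+ k) i j / (k`!)%:R)) : nat -> R).

Definition mxapp (R : realType) (n : nat) (M : 'M[R]_n) (f : 'I_n -> R[i])
    : 'I_n -> R[i] :=
  fun v => \sum_w (M v w)%:C%C * f w.

Definition cmod (R : realType) (z : R[i]) : R :=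
  Num.sqrt (complex.Re z ^+ 2 + complex.Im z ^+ 2).

Definition lp_norm (R : realType) (n : nat) (p : R) (f : 'I_n -> R[i]) : R :=
  (\sum_v (cmod (f v)) `^ p) `^ p^-1.

(* Main.v *)
Require Import Defs.
From HB Require Import structures.
From mathcomp Require Import all_boot all_order all_algebra.
From mathcomp Require Import all_classical all_reals all_analysis.
From mathcomp Require Import complex.
From mathcomp Require Import ring lra zify.
Import Order.TTheory GRing.Theory Num.Theory numFieldNormedType.Exports.
Local Open Scope ring_scope.
Set Implicit Arguments.
Unset Strict Implicit.
Unset Printing Implicit Defensive.

Lemma powR_pos (R : realType) (a x : R) : 0 < a -> a `^ x = expR (x * ln a).
Proof. by move=> a0; rewrite /powR gt_eqF. Qed.

Lemma ln_le_sub1 (R : realType) (y : R) : 0 < y -> ln y <= y - 1.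
Proof.
move=> y0; have h := @le_ln1Dx R (y - 1).
rewrite (_ : 1 + (y - 1) = y) in h; last by ring.
by apply: h; lra.
Qed.

Lemma bern_powR (R : realType) (p r W : R) : 1 <= p -> 0 < r -> 0 <= W ->
  r `^ p + p * r `^ (p - 1) * (W - r) <= W `^ p.
Proof.
move=> p1 r0 W0.
have p0 : 0 < p by lra.
have rp : r `^ p = r * r `^ (p - 1) by rewrite mulr_powRB1 // ltW.
have rp1 : 0 <= r `^ (p - 1) by apply: powR_ge0.
have [->|Wn0] := eqVneq W 0.
  rewrite powR0 ?gt_eqF // rp.
  have : 0 <= (p - 1) * (r * r `^ (p - 1)).
    by apply: mulr_ge0; [lra| apply: mulr_ge0 => //; exact: ltW].
  nra.
have Wp : 0 < W by rewrite lt_def Wn0.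
have WP : W `^ p = W * W `^ (p - 1) by rewrite mulr_powRB1 // ltW.
rewrite WP.
have e1 : W `^ (p - 1) = r `^ (p - 1) * expR ((p - 1) * (ln W - ln r)).
  by rewrite !powR_pos // -expRD; congr expR; ring.
have e2 : 1 + (p - 1) * (ln W - ln r) <= expR ((p - 1) * (ln W - ln r)).
  exact: expR_ge1Dx.
have e3 : ln (r / W) <= r / W - 1 by apply: ln_le_sub1; apply: divr_gt0.
rewrite ln_div ?posrE // in e3.
have e4 : W * (ln W - ln r) >= W - r.
  have : W * (r / W - 1) = r - W by field; rewrite gt_eqF.
  nra.
rewrite e1 rp.
have : W * (1 + (p - 1) * (ln W - ln r)) >= r + p * (W - r).
  nra.
move=> h.
have h2 : W * expR ((p - 1) * (ln W - ln r)) >= r + p * (W - r) by nra.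
nra.
Qed.

Lemma pow_diff_bound (R : realType) (q r M : R) : 0 <= q -> 0 <= r -> r <= M ->
  (M `^ q - r `^ q) * r <= q * M `^ q * (M - r).
Proof.
move=> q0 r0 rM.
have [->|rn0] := eqVneq r 0.
  rewrite mulr0; apply: mulr_ge0; [apply: mulr_ge0 => //; exact: powR_ge0|lra].
have rp : 0 < r by rewrite lt_def rn0.
have Mp : 0 < M by apply: lt_le_trans rM.
rewrite (@powR_pos R M q Mp) (@powR_pos R r q rp).
have e1 : expR (q * ln r) = expR (q * ln M) * expR (q * (ln r - ln M)).
  by rewrite -expRD; congr expR; ring.
have e2 := expR_ge1Dx (q * (ln r - ln M)).
have e3 : ln (M / r) <= M / r - 1 by apply: ln_le_sub1; apply: divr_gt0.
rewrite ln_div ?posrE // in e3.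
have e4 : r * (ln M - ln r) <= M - r.
  have : r * (M / r - 1) = M - r by field; rewrite gt_eqF.
  nra.
have eM := expR_gt0 (q * ln M).
rewrite e1.
have : expR (q * ln M) - expR (q * ln M) * expR (q * (ln r - ln M)) <=
  expR (q * ln M) * (q * (ln M - ln r)) by nra.
move=> h.
have h2 : (expR (q * ln M) - expR (q * ln M) * expR (q * (ln r - ln M))) * r
   <= expR (q * ln M) * (q * (ln M - ln r)) * r by apply: ler_wpM2r => //; exact: ltW.
apply: (le_trans h2).
have : 0 <= expR (q * ln M) * q by apply: mulr_ge0 => //; exact: ltW.
nra.
Qed.

Lemma cs2 (R : realType) (a b c d : R) :
  a * c + b * d <= Num.sqrt (a ^+ 2 + b ^+ 2) * Num.sqrt (c ^+ 2 + d ^+ 2).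
Proof.
set r := Num.sqrt _; set W := Num.sqrt _.
have r0 : 0 <= r by apply: sqrtr_ge0.
have W0 : 0 <= W by apply: sqrtr_ge0.
have r2 : r ^+ 2 = a ^+ 2 + b ^+ 2 by rewrite sqr_sqrtr // addr_ge0 // sqr_ge0.
have W2 : W ^+ 2 = c ^+ 2 + d ^+ 2 by rewrite sqr_sqrtr // addr_ge0 // sqr_ge0.
have h : (a * c + b * d) ^+ 2 <= (r * W) ^+ 2.
  rewrite exprMn r2 W2.
  have : 0 <= (a * d - b * c) ^+ 2 by apply: sqr_ge0.
  move=> h; apply: (le_trans (y := (a * c + b * d) ^+ 2 + (a * d - b * c) ^+ 2)).
    lra.
  by rewrite (_ : (a * c + b * d) ^+ 2 + (a * d - b * c) ^+ 2 = (a ^+ 2 + b ^+ 2) * (c ^+ 2 + d ^+ 2)); last ring.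

have rW : 0 <= r * W by apply: mulr_ge0.
case: (lerP (a * c + b * d) 0) => hs; first by apply: le_trans rW.
by rewrite -(ler_pXn2r (n := 2)) // nnegrE ltW.
Qed.

Lemma convex_powR2 (R : realType) (p a b c d : R) : 2 <= p ->
  Num.sqrt (a ^+ 2 + b ^+ 2) `^ p +
    p * Num.sqrt (a ^+ 2 + b ^+ 2) `^ (p - 2) * (a * (c - a) + b * (d - b))
  <= Num.sqrt (c ^+ 2 + d ^+ 2) `^ p.
Proof.
move=> p2.
set r := Num.sqrt (a ^+ 2 + b ^+ 2); set W := Num.sqrt (c ^+ 2 + d ^+ 2).
have r0 : 0 <= r by apply: sqrtr_ge0.
have W0 : 0 <= W by apply: sqrtr_ge0.
have r2 : r ^+ 2 = a ^+ 2 + b ^+ 2 by rewrite sqr_sqrtr // addr_ge0 // sqr_ge0.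
have hcs : a * c + b * d <= r * W by apply: cs2.
have [r00|rn0] := eqVneq r 0.
  have : a ^+ 2 + b ^+ 2 = 0 by rewrite -r2 r00 expr0n.
  move=> hab.
  have ha : a = 0 by apply/eqP; rewrite -sqrf_eq0; apply/eqP; nra.
  have hb : b = 0 by apply/eqP; rewrite -sqrf_eq0; apply/eqP; nra.
  rewrite r00 ha hb powR0; last by apply/eqP; lra.
  rewrite !(mul0r, mulr0, add0r, addr0); exact: powR_ge0.
have rp : 0 < r by rewrite lt_def rn0.
have e : r `^ (p - 2) * r = r `^ (p - 1).
  rewrite mulrC (_ : p - 2 = (p - 1) - 1); last by ring.
  by apply: mulr_powRB1; [exact: ltW | lra].
have hb := @bern_powR R p r W ltac:(lra) rp W0.
apply: le_trans hb.
rewrite lerD2l -mulrA -[X in _ <= X]mulrA ler_wpM2l //; first by lra.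
rewrite -e -mulrA ler_wpM2l //; first exact: powR_ge0.
nra.
Qed.

Definition mv (R : pzRingType) (n : nat) (A : 'M[R]_n) (x : 'I_n -> R) : 'I_n -> R :=
  fun i => \sum_j A i j * x j.

Definition dot (R : pzRingType) (n : nat) (x y : 'I_n -> R) : R := \sum_i x i * y i.

Lemma mv_shift (R : comPzRingType) n (A : 'M[R]_n) (x : 'I_n -> R) c :
  (forall i, \sum_j A i j = 0) -> mv A (fun j => x j - c) = mv A x.
Proof.
move=> h; apply: funext => i; rewrite /mv.
under eq_bigr do rewrite mulrBr.
by rewrite sumrB -mulr_suml h mul0r subr0.
Qed.

Lemma dot_sym (R : comPzRingType) n (A : 'M[R]_n) (x y : 'I_n -> R) :
  (forall i j, A i j = A j i) -> dot (mv A x) y = dot x (mv A y).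
Proof.
move=> h; rewrite /dot /mv.
under eq_bigr do rewrite mulr_suml.
rewrite exchange_big /=; apply: eq_bigr => j _.
rewrite mulr_sumr; apply: eq_bigr => i _; rewrite h; ring.
Qed.

Lemma sum_sq_le (R : realType) n (a : 'I_n -> R) :
  (\sum_j a j) ^+ 2 <= n%:R * \sum_j a j ^+ 2.
Proof.
rewrite expr2 mulr_suml.
have e : \sum_i \sum_(j < n) (a i ^+ 2 + a j ^+ 2) / 2 =
   (\sum_(i < n) \sum_(j < n) a i ^+ 2 + \sum_(i < n) \sum_(j < n) a j ^+ 2) / 2.
  rewrite -big_split mulr_suml; apply: eq_bigr => i _.
  by rewrite -big_split mulr_suml.
have e2 : \sum_(i < n) \sum_(j < n) a i ^+ 2 = (\sum_j a j ^+ 2) *+ n.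
  rewrite -sumrMnl; apply: eq_bigr => i _; by rewrite sumr_const card_ord.
have e3 : \sum_(i < n) \sum_(j < n) a j ^+ 2 = (\sum_j a j ^+ 2) *+ n.
  by rewrite sumr_const card_ord.
have e4 : n%:R * \sum_j a j ^+ 2 = \sum_i \sum_(j < n) (a i ^+ 2 + a j ^+ 2) / 2.
  by rewrite e e2 e3 -mulr_natl; field.
rewrite e4; apply: ler_sum => i _; rewrite mulr_sumr; apply: ler_sum => j _.
have := sqr_ge0 (a i - a j); rewrite [a i * _]mulrC; lra.
Qed.

Lemma mv_norm_bound (R : realType) n (A : 'M[R]_n) (z : 'I_n -> R) :
  dot (mv A z) (mv A z) <= (n%:R * \sum_i \sum_j A i j ^+ 2) * dot z z.
Proof.
rewrite /dot /mv (mulr_sumr _ _ _ (n%:R : R)) mulr_suml; apply: ler_sum => i _.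
rewrite -expr2; apply: le_trans (sum_sq_le _) _.
rewrite -mulrA ler_wpM2l // mulr_suml; apply: ler_sum => j _.
rewrite exprMn ler_wpM2l ?sqr_ge0 //.
rewrite (bigD1 j) //= expr2 lerDl; apply: sumr_ge0 => k _; rewrite -expr2; exact: sqr_ge0.
Qed.

Lemma pt_bound (R : realType) (eps d x y a b g1 g2 m : R) :
  0 < eps -> 0 <= d * Num.sqrt (x ^+ 2 + y ^+ 2) ->
  d * Num.sqrt (x ^+ 2 + y ^+ 2) <= eps * m -> 0 <= m ->
  m ^+ 2 <= g1 ^+ 2 + g2 ^+ 2 ->
  d * (x * a + y * b) <= eps * (g1 ^+ 2 + g2 ^+ 2 + a ^+ 2 + b ^+ 2) / 2.
Proof.
move=> e0 h1 h2 m0 hm.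
set r := Num.sqrt _ in h1 h2.
have r2 : r ^+ 2 = x ^+ 2 + y ^+ 2 by rewrite sqr_sqrtr // addr_ge0 // sqr_ge0.
have h3 : (d * r) ^+ 2 <= (eps * m) ^+ 2.
  by rewrite ler_pXn2r // nnegrE // mulr_ge0 // ltW.
have h4 : d ^+ 2 * (x ^+ 2 + y ^+ 2) <= eps ^+ 2 * (g1 ^+ 2 + g2 ^+ 2).
  rewrite -r2 -exprMn; apply: le_trans h3 _; rewrite exprMn ler_wpM2l //.
  exact: sqr_ge0.
have h5 : 0 <= (d * x - eps * a) ^+ 2 + (d * y - eps * b) ^+ 2.
  by apply: addr_ge0; apply: sqr_ge0.
have h6 : eps * (d * (x * a + y * b)) <=
    eps * (eps * (g1 ^+ 2 + g2 ^+ 2 + a ^+ 2 + b ^+ 2) / 2).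
  have -> : eps * (eps * (g1 ^+ 2 + g2 ^+ 2 + a ^+ 2 + b ^+ 2) / 2) =
    (eps ^+ 2 * (g1 ^+ 2 + g2 ^+ 2) + eps ^+ 2 * (a ^+ 2 + b ^+ 2)) / 2 by ring.
  have -> : eps * (d * (x * a + y * b)) =
    (d ^+ 2 * (x ^+ 2 + y ^+ 2) + eps ^+ 2 * (a ^+ 2 + b ^+ 2)
      - ((d * x - eps * a) ^+ 2 + (d * y - eps * b) ^+ 2)) / 2 by field.
  lra.
by rewrite ler_pM2l in h6.
Qed.

Lemma accretive (R : realType) (n : nat) (L : 'M[R]_n) (K : R) :
  (forall i j, L i j = L j i) -> (forall i, \sum_j L i j = 0) -> 0 <= K ->
  (forall (h : 'I_n -> R) v0, h v0 = 0 -> dot h h <= K * dot (mv L h) (mv L h)) ->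
  exists2 q : R, 0 < q & q <= 1 /\ forall x y : 'I_n -> R,
    0 <= \sum_v Num.sqrt (x v ^+ 2 + y v ^+ 2) `^ q *
           (x v * mv L (mv L x) v + y v * mv L (mv L y) v).
Proof.
move=> Lsym Lrow K0 Poinc.
set C := n%:R * \sum_i \sum_j L i j ^+ 2.
have C0 : 0 <= C.
  by apply: mulr_ge0 => //; apply: sumr_ge0 => i _; apply: sumr_ge0 => j _; apply: sqr_ge0.
set q := (K + C + 1)^-1.
have q0 : 0 < q by rewrite invr_gt0; lra.
have qKC : q * (K + C) <= 1.
  rewrite /q mulrC ler_pdivrMr; last by lra.
  lra.
exists q => //; split.
  by rewrite /q invf_le1; lra.
move=> x y.
set r := fun v => Num.sqrt (x v ^+ 2 + y v ^+ 2).
have r0 : forall v, 0 <= r v by move=> v; apply: sqrtr_ge0.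
have r2 : forall v, r v ^+ 2 = x v ^+ 2 + y v ^+ 2.
  by move=> v; rewrite sqr_sqrtr // addr_ge0 // sqr_ge0.
have [v0 _|hn] := pickP (@predT 'I_n); last first.
  by rewrite big1 // => v _; have := hn v.
case: (@arg_maxP _ _ 'I_n v0 xpredT r isT) => vs _ Hmax.
set M := r vs.
have rM : forall v, r v <= M by move=> v; exact: Hmax.
have [M0|Mn0] := eqVneq M 0.
  apply: sumr_ge0 => v _.
  have rv : r v = 0 by apply/eqP; rewrite eq_le r0 andbT -M0 rM.
  rewrite /r in rv; rewrite rv powR0 ?mul0r //; exact: lt0r_neq0.
have Mp : 0 < M by rewrite lt_def Mn0 /= r0.
set gx := fun j => x j - x vs.
set gy := fun j => y j - y vs.
have ex : mv L x = mv L gx by rewrite /gx mv_shift.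
have ey : mv L y = mv L gy by rewrite /gy mv_shift.
set Px := dot (mv L gx) (mv L gx).
set Py := dot (mv L gy) (mv L gy).
have Px0 : 0 <= Px by apply: sumr_ge0 => i _; rewrite -expr2; apply: sqr_ge0.
have Py0 : 0 <= Py by apply: sumr_ge0 => i _; rewrite -expr2; apply: sqr_ge0.
have dx : dot x (mv L (mv L x)) = Px by rewrite -(dot_sym _ _ Lsym) ex.
have dy : dot y (mv L (mv L y)) = Py by rewrite -(dot_sym _ _ Lsym) ey.
have Gx : dot gx gx <= K * Px by apply: (Poinc _ vs); rewrite /gx subrr.
have Gy : dot gy gy <= K * Py by apply: (Poinc _ vs); rewrite /gy subrr.
have Cx : dot (mv L (mv L gx)) (mv L (mv L gx)) <= C * Px by apply: mv_norm_bound.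
have Cy : dot (mv L (mv L gy)) (mv L (mv L gy)) <= C * Py by apply: mv_norm_bound.
set Mq := M `^ q.
have Mq0 : 0 < Mq by apply: powR_gt0.
set eps := q * Mq.
have eps0 : 0 < eps by apply: mulr_gt0.
have pw : forall v, (Mq - r v `^ q) * (x v * mv L (mv L x) v + y v * mv L (mv L y) v)
   <= eps * (gx v ^+ 2 + gy v ^+ 2 + mv L (mv L gx) v ^+ 2 + mv L (mv L gy) v ^+ 2) / 2.
  move=> v; rewrite ex ey.
  have hd : r v `^ q <= Mq by apply: ge0_ler_powR => //; [exact: ltW|exact: r0|exact: r0].
  apply: (@pt_bound R eps _ _ _ _ _ _ _ (M - r v)) => //.
  - by apply: mulr_ge0; [lra | exact: r0].
  - rewrite /eps; exact: (pow_diff_bound (ltW q0) (r0 v) (rM v)).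
  - have := rM v; lra.
  - have hc := cs2 (x vs) (y vs) (x v) (y v).
    have := r2 v; have := r2 vs; rewrite /gx /gy -/(r vs) -/(r v) -/M in hc *.
    move=> h1 h2; nra.
have main : \sum_v r v `^ q * (x v * mv L (mv L x) v + y v * mv L (mv L y) v) =
    Mq * (Px + Py) - \sum_v (Mq - r v `^ q) * (x v * mv L (mv L x) v + y v * mv L (mv L y) v).
  rewrite -dx -dy /dot -big_split /= mulr_sumr -sumrB; apply: eq_bigr => v _; ring.
rewrite /r in main; rewrite main.
have S : \sum_v (Mq - r v `^ q) * (x v * mv L (mv L x) v + y v * mv L (mv L y) v)
   <= eps * ((K + C) * (Px + Py)) / 2.
  apply: le_trans (ler_sum _ (fun v _ => pw v)) _.
  rewrite -mulr_suml -mulr_sumr ler_pM2r // ler_pM2l //.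
  rewrite !big_split /=.
  have : \sum_i gx i ^+ 2 = dot gx gx by apply: eq_bigr => i _; rewrite expr2.
  have : \sum_i gy i ^+ 2 = dot gy gy by apply: eq_bigr => i _; rewrite expr2.
  have : \sum_i mv L (mv L gx) i ^+ 2 = dot (mv L (mv L gx)) (mv L (mv L gx)).
    by apply: eq_bigr => i _; rewrite expr2.
  have : \sum_i mv L (mv L gy) i ^+ 2 = dot (mv L (mv L gy)) (mv L (mv L gy)).
    by apply: eq_bigr => i _; rewrite expr2.
  move=> -> -> -> ->; nra.
rewrite /r in S.
have : eps * ((K + C) * (Px + Py)) / 2 <= Mq * (Px + Py) / 2.
  rewrite /eps.
  have -> : q * Mq * ((K + C) * (Px + Py)) / 2 = Mq * (Px + Py) / 2 * (q * (K + C)) by ring.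
  rewrite -[X in _ <= X]mulr1; apply: ler_wpM2l => //.
  by apply: mulr_ge0; [apply: mulr_ge0; [exact: ltW| lra]|].
have : 0 <= Mq * (Px + Py) by apply: mulr_ge0; [exact: ltW| lra].
lra.
Qed.

Lemma edge_neq n (adj : rel 'I_n) (e : edge_type adj) : (val e).2 != (val e).1.
Proof.
apply/eqP => h; move: (valP e); rewrite h ltnn andbF //.
Qed.

Lemma inc_sum (R : realType) n (adj : rel 'I_n) (e : edge_type adj) (h : 'I_n -> R) :
  \sum_v incidence R v e * h v = h (val e).2 - h (val e).1.
Proof.
rewrite (bigD1 (val e).1) //= /incidence eqxx.
rewrite (bigD1 (val e).2) /=; last exact: edge_neq.
rewrite (negbTE (edge_neq e)) eqxx big1; last first.
  by move=> v /andP[ne1 ne2]; rewrite (negbTE ne1) (negbTE ne2) mul0r.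
rewrite addr0; ring.
Qed.

Definition Qf (R : realType) n (adj : rel 'I_n) (h : 'I_n -> R) : R :=
  \sum_(e : edge_type adj) (h (val e).2 - h (val e).1) ^+ 2.

Lemma Qf_ge0 (R : realType) n (adj : rel 'I_n) (h : 'I_n -> R) : 0 <= Qf adj h.
Proof. by apply: sumr_ge0 => e _; apply: sqr_ge0. Qed.

Lemma lap_sym (R : realType) n (adj : rel 'I_n) i j :
  laplacian R adj i j = laplacian R adj j i.
Proof. by rewrite !mxE; apply: eq_bigr => e _; rewrite mulrC. Qed.

Lemma lap_row (R : realType) n (adj : rel 'I_n) i :
  \sum_j laplacian R adj i j = 0.
Proof.
under eq_bigr do rewrite mxE.
rewrite exchange_big /= big1 // => e _.
rewrite -mulr_sumr.
have := inc_sum e (fun _ => (1 : R)); under eq_bigr do rewrite mulr1.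
by move=> ->; rewrite subrr mulr0.
Qed.

Lemma lap_quad (R : realType) n (adj : rel 'I_n) (h : 'I_n -> R) :
  dot h (mv (laplacian R adj) h) = Qf adj h.
Proof.
rewrite /Qf /dot /mv.
have e1 : forall e : edge_type adj, (h (val e).2 - h (val e).1) ^+ 2 =
   \sum_v \sum_w (incidence R v e * h v) * (incidence R w e * h w).
  move=> e; rewrite expr2 -!inc_sum mulr_suml; apply: eq_bigr => v _.
  by rewrite mulr_sumr.
under [RHS]eq_bigr do rewrite e1.
rewrite exchange_big /=; apply: eq_bigr => v _.
rewrite mulr_sumr exchange_big /=; apply: eq_bigr => w _.
rewrite mxE mulr_suml mulr_sumr; apply: eq_bigr => e _; ring.
Qed.

Lemma edge_bound (R : realType) n (adj : rel 'I_n) (h : 'I_n -> R) a b :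
  simple_graph adj -> adj a b -> (h b - h a) ^+ 2 <= Qf adj h.
Proof.
move=> [Irr Sym] ab.
have nab : a != b by apply/eqP => e; move: ab; rewrite e Irr.
case: (ltngtP a b) => hab.
- have P : adj (a, b).1 (a, b).2 && ((a, b).1 < (a, b).2)%N by rewrite /= ab hab.
  pose e := exist (fun p : 'I_n * 'I_n => adj p.1 p.2 && (p.1 < p.2)%N) (a, b) P.
  rewrite /Qf (bigD1 (e : edge_type adj)) //= lerDl.
  by apply: sumr_ge0 => e' _; apply: sqr_ge0.
- have P : adj (b, a).1 (b, a).2 && ((b, a).1 < (b, a).2)%N by rewrite /= Sym ab hab.
  pose e := exist (fun p : 'I_n * 'I_n => adj p.1 p.2 && (p.1 < p.2)%N) (b, a) P.
  rewrite /Qf (bigD1 (e : edge_type adj)) //= -sqrrN opprB lerDl.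
  by apply: sumr_ge0 => e' _; apply: sqr_ge0.
- by move: nab; rewrite (val_inj hab) eqxx.
Qed.

Lemma path_bound (R : realType) n (adj : rel 'I_n) (h : 'I_n -> R) (p : seq 'I_n) u :
  simple_graph adj -> path adj u p ->
  (h (last u p) - h u) ^+ 2 <= (size p)%:R ^+ 2 * Qf adj h.
Proof.
move=> sg; elim: p u => [|w p IH] u /=.
  by move=> _; rewrite subrr expr0n /= mul0r.
move=> /andP[uw pw].
have hA := IH w pw.
have hB := edge_bound h sg uw.
have Q0 := Qf_ge0 adj h.
set A := h (last w p) - h w in hA *.
set B := h w - h u in hB.
set k : R := (size p)%:R in hA.
have k0 : 0 <= k by rewrite /k ler0n.
have -> : h (last w p) - h u = A + B by rewrite /A /B; ring.
rewrite -[(size p).+1]addn1 natrD -/k.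
have [kz|kp] := eqVneq k 0.
  rewrite kz in hA *.
  have : A ^+ 2 <= 0 by move: hA; rewrite expr0n /= mul0r.
  move=> hA2; have A0 : A = 0 by apply/eqP; rewrite -sqrf_eq0 eq_le hA2 sqr_ge0.
  by rewrite A0 add0r add0r expr1n mul1r.
have kpos : 0 < k by rewrite lt_def kp k0.
have hAB : k * (A * B) <= k * (k * Qf adj h).
  have := sqr_ge0 (A - k * B).
  have : k ^+ 2 * B ^+ 2 <= k ^+ 2 * Qf adj h by rewrite ler_wpM2l // sqr_ge0.
  nra.
rewrite ler_pM2l // in hAB.
nra.
Qed.

Lemma poincare (R : realType) n (adj : rel 'I_n) :
  simple_graph adj -> graph_connected adj ->
  exists2 K : R, 0 <= K & forall (h : 'I_n -> R) v0, h v0 = 0 ->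
    dot h h <= K * dot (mv (laplacian R adj) h) (mv (laplacian R adj) h).
Proof.
move=> sg hc.
have hk : forall u v, exists k : nat, forall h : 'I_n -> R,
    (h v - h u) ^+ 2 <= k%:R ^+ 2 * Qf adj h.
  move=> u v; case/connectP: (hc u v) => p pp ->.
  by exists (size p) => h; apply: path_bound.
have mono : forall (k k' : nat) (h : 'I_n -> R), (k <= k')%N ->
    k%:R ^+ 2 * Qf adj h <= k'%:R ^+ 2 * Qf adj h.
  move=> k k' h kk; apply: ler_wpM2r; first exact: Qf_ge0.
  by rewrite ler_pXn2r ?nnegrE ?ler0n // ler_nat.
have hs : forall s : seq ('I_n * 'I_n), exists k0 : nat, forall pr, pr \in s ->
    forall h : 'I_n -> R, (h pr.2 - h pr.1) ^+ 2 <= k0%:R ^+ 2 * Qf adj h.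
  elim=> [|[u v] s [k0 IH]]; first by exists 0%N.
  have [k hk'] := hk u v.
  exists (maxn k k0) => pr; rewrite inE => /orP[/eqP -> | ps] h /=.
    by apply: le_trans (hk' h) _; apply: mono; rewrite leq_maxl.
  by apply: le_trans (IH pr ps h) _; apply: mono; rewrite leq_maxr.
have [k0 Hk0] := hs (enum {: 'I_n * 'I_n}).
set c : R := n%:R * k0%:R ^+ 2.
have c0 : 0 <= c by rewrite /c mulr_ge0 // sqr_ge0.
exists (c * (c + 1) ^+ 2); first by rewrite mulr_ge0 // sqr_ge0.
move=> h v0 hv0.
set L := laplacian R adj.
set D := dot h h; set P := dot (mv L h) (mv L h); set Q := dot h (mv L h).
have hQ : Q = Qf adj h by rewrite /Q lap_quad.
have P0 : 0 <= P by apply: sumr_ge0 => i _; rewrite -expr2 sqr_ge0.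
have hD : D <= c * Q.
  rewrite hQ /D /dot /c -mulrA.
  have -> : n%:R * (k0%:R ^+ 2 * Qf adj h) = \sum_(v < n) k0%:R ^+ 2 * Qf adj h.
    by rewrite sumr_const card_ord mulr_natl.
  apply: ler_sum => v _.
  have := Hk0 (v0, v) (mem_enum _ _) h; rewrite /= hv0 subr0 expr2; done.
have hT : forall t, 2 * t * Q <= D + t ^+ 2 * P.
  move=> t.
  have e : \sum_v (h v - t * mv L h v) ^+ 2 = D - 2 * t * Q + t ^+ 2 * P.
    rewrite /D /Q /P /dot.
    have -> : \sum_v (h v - t * mv L h v) ^+ 2 =
       \sum_v (h v * h v - (2 * t) * (h v * mv L h v)
          + t ^+ 2 * (mv L h v * mv L h v)).
      by apply: eq_bigr => v _; ring.
    by rewrite big_split /= sumrB -!mulr_sumr.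
  have : 0 <= \sum_v (h v - t * mv L h v) ^+ 2 by apply: sumr_ge0 => v _; apply: sqr_ge0.
  rewrite e; lra.
have h2 := hT (c + 1).
have h3 : 2 * (c + 1) * D <= 2 * (c + 1) * (c * Q).
  by rewrite ler_wpM2l //; lra.
have h4 : c * (2 * (c + 1) * Q) <= c * (D + (c + 1) ^+ 2 * P) by rewrite ler_wpM2l.
have h5 : 0 <= c * (c + 1) ^+ 2 * P by rewrite mulr_ge0 // mulr_ge0 // sqr_ge0.
have h6 : (c + 2) * D <= c * (c + 1) ^+ 2 * P by nra.
have h7 : c * (c + 1) ^+ 2 * P <= (c + 2) * (c * (c + 1) ^+ 2 * P) by nra.
have : (c + 2) * D <= (c + 2) * (c * (c + 1) ^+ 2 * P) by apply: le_trans h7.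
by rewrite ler_pM2l; [rewrite mulrA | lra].
Qed.

Lemma mulmx_entry (R : realType) n (A C : 'M[R]_n) i j :
  (A * C) i j = \sum_l A i l * C l j.
Proof. by rewrite -mulmxE mxE. Qed.

Lemma exprZ_entry (R : realType) n (B : 'M[R]_n) (a : R) k i j :
  ((a *: B) ^+ k) i j = a ^+ k * (B ^+ k) i j.
Proof.
elim: k i j => [|k IH] i j; first by rewrite !expr0 mul1r.
rewrite !exprS !mulmx_entry mulr_sumr; apply: eq_bigr => l _.
by rewrite IH mxE; ring.
Qed.

Lemma pow_entry_bound (R : realType) n (B : 'M[R]_n) (b : R) :
  0 <= b -> (forall i j, `|B i j| <= b) ->
  forall k i j, `|(B ^+ k) i j| <= (n%:R * b) ^+ k.
Proof.
move=> b0 hb; elim=> [|k IH] i j.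
  by rewrite expr0 mxE expr0; case: (i == j); rewrite ?normr1 ?normr0.
rewrite exprS mulmx_entry exprS.
apply: le_trans (ler_norm_sum _ _ _) _.
have -> : n%:R * b * (n%:R * b) ^+ k = \sum_(l < n) b * (n%:R * b) ^+ k.
  by rewrite sumr_const card_ord -mulr_natl; ring.
apply: ler_sum => l _; rewrite normrM; apply: ler_pM => //.
Qed.

Lemma dom_series (R : realType) (u : R ^nat) (a C : R) : 0 <= a -> 0 <= C ->
  (forall k, `|u k| <= C * exp_coeff a k) ->
  cvgn (series u) /\ `|limn (series u)| <= C * expR a.
Proof.
move=> a0 C0 hu.
have cv : cvgn (series (fun k => C * exp_coeff a k)).
  exact: (is_cvg_seriesZ (k := C) (is_cvg_series_exp_coeff a)).
have cn : cvgn [normed series u].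
  have -> : [normed series u] = series (fun k => `|u k|) by [].
  apply: (series_le_cvg _ _ hu cv) => k //.
  by apply: mulr_ge0 => //; apply: exp_coeff_ge0.
split; first exact: normed_cvg.
apply: le_trans (lim_series_norm cn) _.
have -> : C * expR a = limn (series (fun k => C * exp_coeff a k)).
  have h := lim_seriesZ C (is_cvg_series_exp_coeff a).
  rewrite /expR; exact: (esym h).
exact: lim_series_le.
Qed.

Lemma expmx0 (R : realType) n (B : 'M[R]_n) i j : expmx (- 0 *: B) i j = (i == j)%:R.
Proof.
rewrite mxE.
set u := (fun k : nat => _).
have h : (series u @ \oo --> ((i == j)%:R : R))%classic.
  apply: cvg_near_cst.
  near=> N.
  have hN : (0 < N)%N by near: N; exists 1%N.
  rewrite -(prednK hN) seriesEord /= big_ord_recl /= big1 ?addr0.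
    by rewrite /u exprZ_entry !expr0 mul1r fact0 divr1 mxE.
  by move=> k _; rewrite /u exprZ_entry oppr0 expr0n /= !mul0r.
exact: cvg_lim h.
Unshelve. all: by end_near.
Qed.

Lemma Fk_bound (R : realType) (x y M : R) k : 1 <= M -> `|x| <= M -> `|y| <= M ->
  `|x ^+ k - y ^+ k - k%:R * (x - y) * y ^+ k.-1| <= (k * k)%:R * (x - y) ^+ 2 * M ^+ k.
Proof.
move=> M1 hx hy.
have M0 : 0 <= M by lra.
have id : forall m, x ^+ m.+1 - y ^+ m.+1 - m.+1%:R * (x - y) * y ^+ m =
    x * (x ^+ m - y ^+ m - m%:R * (x - y) * y ^+ m.-1) + m%:R * (x - y) ^+ 2 * y ^+ m.-1.
  case=> [|m] /=; first by rewrite !expr0 !expr1; ring.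
  rewrite !(exprS x) !(exprS y) -[m.+2]addn2 -[m.+1]addn1 !natrD; ring.
elim: k => [|k IH].
  have -> : x ^+ 0 - y ^+ 0 - 0%:R * (x - y) * y ^+ 0.-1 = 0 by rewrite !expr0; ring.
  by rewrite normr0 mul0n !mul0r.
rewrite id.
apply: le_trans (ler_normD _ _) _.
rewrite !normrM normr_nat.
have hyk : `|y| ^+ k.-1 <= M ^+ k.+1.
  apply: (@le_trans _ _ (M ^+ k.-1)).
    by apply: lerXn2r => //; rewrite nnegrE // normr_ge0.
  by apply: ler_weXn2l => //; rewrite (leq_trans (leq_pred k)).
have h2 : `|x| * `|x ^+ k - y ^+ k - k%:R * (x - y) * y ^+ k.-1|
     <= M * ((k * k)%:R * (x - y) ^+ 2 * M ^+ k).
  by apply: ler_pM => //; apply: normr_ge0.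
have h3 : k%:R * (`|x - y| * `|x - y|) * `|y ^+ k.-1| <= k%:R * (x - y) ^+ 2 * M ^+ k.+1.
  rewrite -normrM -expr2 (ger0_norm (sqr_ge0 _)); apply: ler_wpM2l.
    by rewrite mulr_ge0 // sqr_ge0.
  by rewrite normrX.
apply: le_trans (lerD h2 h3) _.
have -> : M * ((k * k)%:R * (x - y) ^+ 2 * M ^+ k) = (k * k)%:R * (x - y) ^+ 2 * M ^+ k.+1.
  by rewrite [M ^+ k.+1]exprS; ring.
rewrite -mulrDl -mulrDl ler_wpM2r ?exprn_ge0 // ler_wpM2r ?sqr_ge0 //.
rewrite -natrD ler_nat; nia.
Qed.

Definition ecoef (R : realType) n (B : 'M[R]_n) (t : R) (i j : 'I_n) (k : nat) : R :=
  (- t) ^+ k * (B ^+ k) i j / k`!%:R.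

Lemma expmx_entry (R : realType) n (B : 'M[R]_n) t i j :
  expmx (- t *: B) i j = limn (series (ecoef B t i j)).
Proof.
rewrite mxE.
have -> : (fun k => ((- t *: B) ^+ k) i j / k`!%:R) = ecoef B t i j.
  by apply: funext => k; rewrite exprZ_entry.
by [].
Qed.

Definition Bsum (R : realType) n (B : 'M[R]_n) : R := \sum_i \sum_j `|B i j|.

Lemma entry_le (R : realType) n (B : 'M[R]_n) i j : `|B i j| <= Bsum B.
Proof.
rewrite /Bsum (bigD1 i) //= (bigD1 j) //= -addrA lerDl.
apply: addr_ge0; apply: sumr_ge0 => *; [exact: normr_ge0|].
by apply: sumr_ge0 => *; exact: normr_ge0.
Qed.

Lemma Bsum_ge0 (R : realType) n (B : 'M[R]_n) : 0 <= Bsum B.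
Proof. by apply: sumr_ge0 => *; apply: sumr_ge0 => *; exact: normr_ge0. Qed.

Lemma ecoef_bound (R : realType) n (B : 'M[R]_n) t T i j k : `|t| <= T ->
  `|ecoef B t i j k| <= exp_coeff (T * (n%:R * Bsum B)) k.
Proof.
move=> tT.
have T0 : 0 <= T by apply: le_trans tT.
rewrite /ecoef /exp_coeff /= normrM normfV normr_nat ler_wpM2r ?invr_ge0 ?ler0n //.
rewrite normrM normrX normrN exprMn; apply: ler_pM.
- by rewrite exprn_ge0.
- by [].
- by apply: lerXn2r => //; rewrite nnegrE.
- apply: pow_entry_bound; [exact: Bsum_ge0|exact: entry_le].
Qed.

Lemma ecoef_dom (R : realType) n (B : 'M[R]_n) t T i j : `|t| <= T ->
  cvgn (series (ecoef B t i j)) /\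
  `|limn (series (ecoef B t i j))| <= expR (T * (n%:R * Bsum B)).
Proof.
move=> tT.
have T0 : 0 <= T by apply: le_trans tT.
have := @dom_series R (ecoef B t i j) (T * (n%:R * Bsum B)) 1.
rewrite mul1r; apply => //.
- by rewrite mulr_ge0 // mulr_ge0 // Bsum_ge0.
- by move=> k; rewrite mul1r; apply: ecoef_bound.
Qed.

Lemma lim_sum_series (R : realType) n (F : 'I_n -> nat -> R) :
  (forall l, cvgn (series (F l))) ->
  cvgn (series (fun k => \sum_l F l k)) /\
  limn (series (fun k => \sum_l F l k)) = \sum_l limn (series (F l)).
Proof.
move=> hF.
have e : series (fun k => \sum_l F l k) = (fun N => \sum_l series (F l) N).
  apply: funext => N; rewrite /series /= exchange_big //.
have h : ((fun N => \sum_l series (F l) N) @ \oo --> \sum_l limn (series (F l)))%classic.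
  apply: (@cvg_big _ _ +%R 0 xpredT add_continuous _ _ _ (fun l N => series (F l) N)).
  move=> l _; exact: hF.
rewrite e; split; first by apply/cvg_ex; eexists; exact: h.
exact: cvg_lim h.
Qed.

Lemma sq_le_4pow k : (k * k <= 4 ^ k)%N.
Proof.
have h : (k <= 2 ^ k)%N by apply: ltnW; apply: ltn_expl.
rewrite (_ : 4 = 2 * 2)%N // expnMn.
exact: leq_mul.
Qed.

Lemma taylor (R : realType) n (B : 'M[R]_n) s t T i j : `|s| <= T -> `|t| <= T ->
  `|limn (series (ecoef B s i j)) - limn (series (ecoef B t i j))
     - (t - s) * \sum_l B i l * limn (series (ecoef B t l j))|
   <= (t - s) ^+ 2 * expR (4 * (T + 1) * (n%:R * Bsum B)).
Proof.
move=> sT tT.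
have T0 : 0 <= T by apply: le_trans tT.
set Lam := n%:R * Bsum B.
have Lam0 : 0 <= Lam by rewrite mulr_ge0 // Bsum_ge0.
have cs := (ecoef_dom B i j sT).1.
have ct := (ecoef_dom B i j tT).1.
set a := fun k => \sum_l B i l * ecoef B t l j k.
have [ca la] : cvgn (series a) /\ limn (series a) = \sum_l B i l * limn (series (ecoef B t l j)).
  have := @lim_sum_series R n (fun l k => B i l * ecoef B t l j k).
  case.
    move=> l; exact: (is_cvg_seriesZ (k := B i l) (ecoef_dom B l j tT).1).
  move=> c1 l1; split; first exact: c1.
  rewrite l1; apply: eq_bigr => l _.
  exact: (lim_seriesZ (B i l) (ecoef_dom B l j tT).1).
set e := fun k => if k is k'.+1 then a k' else 0.
have se : forall N, series e N.+1 = series a N.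
  by move=> N; rewrite !seriesEord /= big_ord_recl /= add0r.
have [ce le] : cvgn (series e) /\ limn (series e) = limn (series a).
  have h : (series a @ \oo --> limn (series a))%classic by [].
  have h' : (series e @ \oo --> limn (series a))%classic.
    rewrite -cvg_shiftS.
    have -> : [sequence series e n0.+1]_n0 = series a.
      by apply: funext => N /=; rewrite se.
    exact: h.
  split; first by apply/cvg_ex; eexists; exact: h'.
  exact: cvg_lim h'.
have ee : forall k, e k = k%:R * (- t) ^+ k.-1 * (B ^+ k) i j / k`!%:R.
  case=> [|k]; first by rewrite /e mul0r !mul0r.
  rewrite /e /a /=.
  have -> : \sum_l B i l * ecoef B t l j k = (- t) ^+ k * (B ^+ k.+1) i j / k`!%:R.
    rewrite exprS mulmx_entry /ecoef mulr_sumr mulr_suml; apply: eq_bigr => l _; ring.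
  rewrite factS natrM; field.
  by rewrite pnatr_eq0 -lt0n fact_gt0 /= (_ : 1 + k%:R = k.+1%:R) ?pnatr_eq0 // -addn1 natrD addrC.
set d := fun k => ecoef B s i j k - ecoef B t i j k - (t - s) * e k.
have ed : d = (ecoef B s i j - ecoef B t i j) - (t - s) *: e by apply: funext.
have cd : cvgn (series d).
  rewrite ed; apply: is_cvg_seriesB; first exact: is_cvg_seriesB.
  exact: is_cvg_seriesZ.
have ld : limn (series d) = limn (series (ecoef B s i j)) - limn (series (ecoef B t i j))
     - (t - s) * limn (series e).
  rewrite ed lim_seriesB //; last exact: is_cvg_seriesZ.
    rewrite lim_seriesB // lim_seriesZ //.
  exact: is_cvg_seriesB.
rewrite -la -le -ld.
have hb : forall k, `|d k| <= (t - s) ^+ 2 * exp_coeff (4 * (T + 1) * Lam) k.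
  move=> k.
  have -> : d k = ((- s) ^+ k - (- t) ^+ k - k%:R * ((- s) - (- t)) * (- t) ^+ k.-1)
      * (B ^+ k) i j / k`!%:R.
    by rewrite /d ee /ecoef; ring.
  have hF := @Fk_bound R (- s) (- t) (T + 1) k ltac:(lra) ltac:(rewrite normrN; lra)
     ltac:(rewrite normrN; lra).
  have hB := pow_entry_bound (Bsum_ge0 B) (@entry_le R n B) k i j.
  rewrite /exp_coeff /= !normrM normfV normr_nat.
  rewrite ler_pdivrMr; last by rewrite ltr0n fact_gt0.
  rewrite mulrA -[X in _ <= X]mulrA mulVf ?mulr1; last by rewrite pnatr_eq0 -lt0n fact_gt0.
  apply: le_trans (ler_pM _ _ hF hB) _; try by apply: normr_ge0.
  have -> : (- s - - t) ^+ 2 = (t - s) ^+ 2 by ring.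
  rewrite -/Lam.
  have hk : (k * k)%:R <= 4 ^+ k :> R.
    by rewrite -natrX ler_nat sq_le_4pow.
  have -> : (4 * (T + 1) * Lam) ^+ k = 4 ^+ k * ((T + 1) ^+ k * Lam ^+ k).
    by rewrite !exprMn -mulrA.
  have h1 : 0 <= (t - s) ^+ 2 * (T + 1) ^+ k * Lam ^+ k.
    by rewrite mulr_ge0 ?exprn_ge0 // mulr_ge0 ?sqr_ge0 ?exprn_ge0 //; lra.
  have -> : (k * k)%:R * (t - s) ^+ 2 * (T + 1) ^+ k * Lam ^+ k =
      (k * k)%:R * ((t - s) ^+ 2 * (T + 1) ^+ k * Lam ^+ k) by ring.
  have -> : (t - s) ^+ 2 * (4 ^+ k * ((T + 1) ^+ k * Lam ^+ k)) =
      4 ^+ k * ((t - s) ^+ 2 * (T + 1) ^+ k * Lam ^+ k) by ring.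
  exact: ler_wpM2r.
have := @dom_series R d (4 * (T + 1) * Lam) ((t - s) ^+ 2).
case => //.
- by rewrite mulr_ge0 // mulr_ge0 //; lra.
- exact: sqr_ge0.
Qed.

Lemma tele (R : realType) (G : R -> R) (T K0 : R) : 0 <= T -> 0 <= K0 ->
  (forall s t, 0 <= s -> s <= t -> t <= T -> G t - G s <= K0 * (t - s) ^+ 2) ->
  G T <= G 0.
Proof.
move=> T0 K00 hG.
have hN : forall N : nat, (0 < N)%N -> G T - G 0 <= K0 * T ^+ 2 / N%:R.
  move=> N N0.
  have Np : 0 < N%:R :> R by rewrite ltr0n.
  set u := fun k : nat => G (k%:R * T / N%:R).
  have uN : u N = G T by rewrite /u; congr G; field; rewrite gt_eqF.
  have u0 : u 0%N = G 0 by rewrite /u mul0r mul0r.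
  have -> : G T - G 0 = \sum_(k < N) (u k.+1 - u k).
    by rewrite -(big_mkord xpredT (fun k => u k.+1 - u k)) telescope_sumr // uN u0.
  have -> : K0 * T ^+ 2 / N%:R = \sum_(k < N) K0 * (T / N%:R) ^+ 2.
    rewrite sumr_const card_ord -mulr_natl; by field; rewrite gt_eqF.
  apply: ler_sum => k _.
  have hk := ltn_ord k.
  have -> : T / N%:R = k.+1%:R * T / N%:R - k%:R * T / N%:R.
    rewrite -addn1 natrD; by field; rewrite gt_eqF.
  apply: hG.
  - by rewrite mulr_ge0 // ?invr_ge0 // mulr_ge0.
  - by rewrite ler_pM2r ?invr_gt0 //; apply: ler_wpM2r => //; rewrite ler_nat.
  - by rewrite ler_pdivrMr // [T * _]mulrC; apply: ler_wpM2r => //; rewrite ler_nat.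
case: (lerP (G T - G 0) 0) => h; first lra.
set d := G T - G 0 in h.
set N := (Num.truncn (K0 * T ^+ 2 / d)).+1.
have := hN N isT.
have hlt := truncnS_gt (K0 * T ^+ 2 / d).
rewrite -/N in hlt.
have Np : 0 < N%:R :> R by rewrite ltr0n.
rewrite ler_pdivlMr // => h2.
rewrite ltr_pdivrMr // in hlt.
rewrite -/d mulrC in h2; lra.
Qed.

Definition Xf (R : realType) n (B : 'M[R]_n) (s : R) (a : 'I_n -> R) : 'I_n -> R :=
  fun v => \sum_w expmx (- s *: B) v w * a w.

Definition Gf (R : realType) n (p : R) (B : 'M[R]_n) (a b : 'I_n -> R) (s : R) : R :=
  \sum_v Num.sqrt (Xf B s a v ^+ 2 + Xf B s b v ^+ 2) `^ p.

Lemma mvLL (R : realType) n (L : 'M[R]_n) (x : 'I_n -> R) :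
  mv (L ^+ 2) x = mv L (mv L x).
Proof.
apply: funext => v; rewrite /mv expr2.
under eq_bigr do rewrite mulmx_entry mulr_suml.
rewrite exchange_big /=; apply: eq_bigr => l _.
by rewrite mulr_sumr; apply: eq_bigr => w _; rewrite mulrA.
Qed.

Lemma X_bound (R : realType) n (B : 'M[R]_n) (a : 'I_n -> R) t T v :
  0 <= t -> t <= T ->
  `|Xf B t a v| <= expR (T * (n%:R * Bsum B)) * \sum_w `|a w|.
Proof.
move=> t0 tT; rewrite /Xf mulr_sumr.
apply: le_trans (ler_norm_sum _ _ _) _; apply: ler_sum => w _.
rewrite normrM; apply: ler_wpM2r => //.
have htT : `|t| <= T by rewrite ger0_norm.
rewrite expmx_entry; exact: (ecoef_dom B v w htT).2.
Qed.

Lemma DX_bound (R : realType) n (B : 'M[R]_n) (a : 'I_n -> R) s t T v :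
  0 <= s -> s <= t -> t <= T ->
  `|Xf B s a v - Xf B t a v - (t - s) * mv B (Xf B t a) v|
    <= (t - s) ^+ 2 * expR (4 * (T + 1) * (n%:R * Bsum B)) * \sum_w `|a w|.
Proof.
move=> s0 st tT.
have t0 : 0 <= t by apply: le_trans st.
have e : Xf B s a v - Xf B t a v - (t - s) * mv B (Xf B t a) v =
    \sum_w (expmx (- s *: B) v w - expmx (- t *: B) v w
       - (t - s) * \sum_l B v l * expmx (- t *: B) l w) * a w.
  rewrite /Xf /mv -sumrB.
  have -> : \sum_l B v l * (\sum_w expmx (- t *: B) l w * a w) =
     \sum_w (\sum_l B v l * expmx (- t *: B) l w) * a w.
    under eq_bigr do rewrite mulr_sumr.
    rewrite exchange_big /=; apply: eq_bigr => w _.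
    by rewrite mulr_suml; apply: eq_bigr => l _; rewrite mulrA.
  rewrite mulr_sumr -sumrB; apply: eq_bigr => w _; ring.
rewrite e mulr_sumr.
apply: le_trans (ler_norm_sum _ _ _) _; apply: ler_sum => w _.
rewrite normrM; apply: ler_wpM2r => //.
rewrite !expmx_entry.
under eq_bigr do rewrite expmx_entry.
apply: taylor; rewrite ger0_norm //; lra.
Qed.


Lemma vbound (R : realType) (q X Y DX DY A D : R) : 0 < q -> q <= 1 ->
  `|X| <= A -> `|Y| <= A -> `|DX| <= D -> `|DY| <= D ->
  - (Num.sqrt (X ^+ 2 + Y ^+ 2) `^ q * (X * DX + Y * DY)) <= (2 * A + 1) ^+ 2 * (2 * D).
Proof.
move=> q0 q1 hX hY hDX hDY.
have A0 : 0 <= A by apply: le_trans hX.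
have D0 : 0 <= D by apply: le_trans hDX.
set r := Num.sqrt _.
have r0 : 0 <= r by apply: sqrtr_ge0.
have hr : r <= 2 * A.
  apply: (@le_trans _ _ (`|X| + `|Y|)); last lra.
  rewrite /r -(ger0_norm (addr_ge0 (normr_ge0 X) (normr_ge0 Y))) -sqrtr_sqr.
  rewrite ler_sqrt; last by rewrite sqr_ge0.
  rewrite sqrrD !real_normK ?num_real //.
  have : 0 <= `|X| * `|Y| by rewrite mulr_ge0.
  lra.
have hrho : r `^ q <= 2 * A + 1.
  apply: (@le_trans _ _ ((r + 1) `^ q)).
    by apply: ge0_ler_powR; rewrite ?nnegrE //; [exact: ltW| lra | lra].
  apply: le_trans (ler1_powR _ _) _; [lra | done | lra].
have rho0 : 0 <= r `^ q by apply: powR_ge0.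
have h1 : - (X * DX + Y * DY) <= `|X| * `|DX| + `|Y| * `|DY|.
  apply: le_trans (ler_norm _) _; rewrite normrN.
  by apply: le_trans (ler_normD _ _) _; rewrite !normrM.
have h2 : `|X| * `|DX| + `|Y| * `|DY| <= 2 * A * D.
  have : `|X| * `|DX| <= A * D by apply: ler_pM.
  have : `|Y| * `|DY| <= A * D by apply: ler_pM.
  lra.
have h3 : - (r `^ q * (X * DX + Y * DY)) <= (2 * A + 1) * (2 * A * D).
  rewrite -mulrN; apply: (@le_trans _ _ (r `^ q * (2 * A * D))).
    by apply: ler_wpM2l => //; apply: le_trans h1 h2.
  by apply: ler_wpM2r => //; rewrite mulr_ge0 // mulr_ge0.
apply: le_trans h3 _.
apply: (@le_trans _ _ ((2 * A + 1) * ((2 * A + 1) * (2 * D)))).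
  apply: ler_wpM2l; first lra.
  have -> : 2 * A * D = A * (2 * D) by ring.
  by apply: ler_wpM2r; lra.
by rewrite expr2 mulrA.
Qed.

Lemma aux_le (R : realType) (x y z : R) : x + z <= y -> x - y <= - z.
Proof. lra. Qed.

Definition Kc (R : realType) n (q T : R) (B : 'M[R]_n) (a b : 'I_n -> R) : R :=
  (2 + q) * (n%:R * ((2 * (expR (T * (n%:R * Bsum B)) * \sum_w (`|a w| + `|b w|)) + 1) ^+ 2 *
     (2 * (expR (4 * (T + 1) * (n%:R * Bsum B)) * \sum_w (`|a w| + `|b w|))))).

Lemma step (R : realType) n (L : 'M[R]_n) (q : R) (a b : 'I_n -> R) (T s t : R) :
  0 < q -> q <= 1 ->
  (forall x y : 'I_n -> R, 0 <= \sum_v Num.sqrt (x v ^+ 2 + y v ^+ 2) `^ q *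
           (x v * mv L (mv L x) v + y v * mv L (mv L y) v)) ->
  0 <= s -> s <= t -> t <= T ->
  Gf (2 + q) (L ^+ 2) a b t - Gf (2 + q) (L ^+ 2) a b s <= Kc q T (L ^+ 2) a b * (t - s) ^+ 2.
Proof.
move=> q0 q1 hacc s0 st tT.
have t0 : 0 <= t by apply: le_trans st.
set p := 2 + q.
set B := L ^+ 2.
set X := Xf B t a; set Y := Xf B t b; set Xs := Xf B s a; set Ys := Xf B s b.
set Sab := \sum_w (`|a w| + `|b w|).
set A := expR (T * (n%:R * Bsum B)) * Sab.
set CT := expR (4 * (T + 1) * (n%:R * Bsum B)).
set D := (t - s) ^+ 2 * CT * Sab.
have Sa : \sum_w `|a w| <= Sab by apply: ler_sum => w _; rewrite lerDl.
have Sb : \sum_w `|b w| <= Sab by apply: ler_sum => w _; rewrite lerDr.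
have EB0 : 0 <= expR (T * (n%:R * Bsum B)) by apply: expR_ge0.
have CT0 : 0 <= CT by apply: expR_ge0.
have hX : forall v, `|X v| <= A.
  move=> v; apply: le_trans (X_bound B a v t0 tT) _; exact: ler_wpM2l.
have hY : forall v, `|Y v| <= A.
  move=> v; apply: le_trans (X_bound B b v t0 tT) _; exact: ler_wpM2l.
set DX := fun v => Xs v - X v - (t - s) * mv B X v.
set DY := fun v => Ys v - Y v - (t - s) * mv B Y v.
have hDX : forall v, `|DX v| <= D.
  move=> v; apply: le_trans (DX_bound B a v s0 st tT) _.
  by apply: ler_wpM2l => //; rewrite mulr_ge0 // sqr_ge0.
have hDY : forall v, `|DY v| <= D.
  move=> v; apply: le_trans (DX_bound B b v s0 st tT) _.
  by apply: ler_wpM2l => //; rewrite mulr_ge0 // sqr_ge0.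
set r := fun v => Num.sqrt (X v ^+ 2 + Y v ^+ 2).
have conv : forall v, r v `^ p + p * r v `^ q * (X v * (Xs v - X v) + Y v * (Ys v - Y v))
    <= Num.sqrt (Xs v ^+ 2 + Ys v ^+ 2) `^ p.
  move=> v; have := @convex_powR2 R p (X v) (Y v) (Xs v) (Ys v).
  by rewrite (_ : p - 2 = q); [apply; rewrite /p; lra | rewrite /p; ring].
have hLL := hacc X Y.
rewrite -!mvLL -/B in hLL.
have dec : forall v, X v * (Xs v - X v) + Y v * (Ys v - Y v) =
    (t - s) * (X v * mv B X v + Y v * mv B Y v) + (X v * DX v + Y v * DY v).
  by move=> v; rewrite /DX /DY; ring.
have e1 : Gf p B a b t - Gf p B a b s =
    \sum_v (r v `^ p - Num.sqrt (Xs v ^+ 2 + Ys v ^+ 2) `^ p).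
  by rewrite /Gf sumrB.
rewrite e1.
apply: (@le_trans _ _ (\sum_v (- (p * (t - s)) * (r v `^ q * (X v * mv B X v + Y v * mv B Y v))
     + p * (- (r v `^ q * (X v * DX v + Y v * DY v)))))).
  apply: ler_sum => v _.
  have := conv v; rewrite dec.
  move=> h.
  have -> : - (p * (t - s)) * (r v `^ q * (X v * mv B X v + Y v * mv B Y v)) +
    p * - (r v `^ q * (X v * DX v + Y v * DY v)) =
    - (p * r v `^ q * ((t - s) * (X v * mv B X v + Y v * mv B Y v) + (X v * DX v + Y v * DY v))) by ring.
  exact: aux_le h.
rewrite big_split /= -mulr_sumr.
have p0 : 0 <= p by rewrite /p addr_ge0 // ltW.
have ts0 : 0 <= t - s by rewrite subr_ge0.
have h1 : - (p * (t - s)) * \sum_v r v `^ q * (X v * mv B X v + Y v * mv B Y v) <= 0.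
  rewrite mulNr oppr_le0; apply: mulr_ge0; first exact: mulr_ge0.
  exact: hLL.
apply: le_trans (lerD h1 (lexx _)) _; rewrite add0r -mulr_sumr.
apply: (@le_trans _ _ (p * \sum_(v < n) (2 * A + 1) ^+ 2 * (2 * D))).
  apply: ler_wpM2l => //; apply: ler_sum => v _.
  exact: vbound.
rewrite sumr_const card_ord /Kc -/p -/Sab -/A -/CT /D.
rewrite -mulr_natl le_eqVlt; apply/orP; left; apply/eqP; ring.
Qed.

Lemma Re_sum (R : realType) n (c : 'I_n -> R) (f : 'I_n -> R[i]) :
  complex.Re (\sum_w (c w)%:C%C * f w) = \sum_w c w * complex.Re (f w).
Proof.
apply: esym; apply: (big_rec2 (fun (x : R) (y : R[i]) => x = complex.Re y)) => //.
move=> w x y _ ->; case: (f w) => u1 u2; case: y => y1 y2 /=; ring.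
Qed.

Lemma Im_sum (R : realType) n (c : 'I_n -> R) (f : 'I_n -> R[i]) :
  complex.Im (\sum_w (c w)%:C%C * f w) = \sum_w c w * complex.Im (f w).
Proof.
apply: esym; apply: (big_rec2 (fun (x : R) (y : R[i]) => x = complex.Im y)) => //.
move=> w x y _ ->; case: (f w) => u1 u2; case: y => y1 y2 /=; ring.
Qed.

Lemma Xf0 (R : realType) n (B : 'M[R]_n) (a : 'I_n -> R) v : Xf B 0 a v = a v.
Proof.
rewrite /Xf (bigD1 v) //= expmx0 eqxx mul1r big1 ?addr0 // => w wv.
by rewrite expmx0 eq_sym (negbTE wv) mul0r.
Qed.

Lemma Kc_ge0 (R : realType) n (q T : R) (B : 'M[R]_n) (a b : 'I_n -> R) :
  0 <= q -> 0 <= T -> 0 <= Kc q T B a b.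
Proof.
move=> q0 T0.
have S0 : 0 <= \sum_w (`|a w| + `|b w|) by apply: sumr_ge0 => w _; apply: addr_ge0.
rewrite /Kc; apply: mulr_ge0; first lra.
apply: mulr_ge0 => //; apply: mulr_ge0; first exact: sqr_ge0.
by apply: mulr_ge0 => //; apply: mulr_ge0 => //; apply: expR_ge0.
Qed.

Unset Implicit Arguments.
Set Strict Implicit.

Theorem proposition2p4 (R : realType) (n : nat) (adj : rel 'I_n) :
  simple_graph adj -> graph_connected adj ->
  exists p : R, 2 < p /\
    forall (t : R), 0 <= t -> forall f : 'I_n -> R[i],
      lp_norm p (mxapp (expmx (- t *: (laplacian R adj ^+ 2))) f)
        <= lp_norm p f.
Proof.
move=> sg conn.
have [K K0 Poinc] := @poincare R n adj sg conn.
have [q q0 [q1 hacc]] := @accretive R n (laplacian R adj) K (@lap_sym R n adj)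
   (@lap_row R n adj) K0 Poinc.
exists (2 + q); split; first lra.
move=> t t0 f.
set L := laplacian R adj.
set a := fun w => complex.Re (f w).
set b := fun w => complex.Im (f w).
have eL : \sum_v cmod (mxapp (expmx (- t *: L ^+ 2)) f v) `^ (2 + q) = Gf (2 + q) (L ^+ 2) a b t.
  by rewrite /Gf /cmod /mxapp; apply: eq_bigr => v _; rewrite Re_sum Im_sum.
have eR : \sum_v cmod (f v) `^ (2 + q) = Gf (2 + q) (L ^+ 2) a b 0.
  by rewrite /Gf; apply: eq_bigr => v _; rewrite !Xf0.
rewrite /lp_norm eL eR.
have hT : Gf (2 + q) (L ^+ 2) a b t <= Gf (2 + q) (L ^+ 2) a b 0.
  apply: (@tele R (Gf (2 + q) (L ^+ 2) a b) t (Kc q t (L ^+ 2) a b) t0).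
    by apply: Kc_ge0 => //; exact: ltW.
  move=> s t' s0 st tt.
  exact: (@step R n L q a b t s t' q0 q1 hacc s0 st tt).
have hp : 0 <= (2 + q)^-1 by rewrite invr_ge0 addr_ge0 // ltW.
have hm := @ge0_ler_powR R ((2 + q)^-1) hp.
have n1 : Gf (2 + q) (L ^+ 2) a b t \in Num.nneg.
  by rewrite nnegrE; apply: sumr_ge0 => v _; apply: powR_ge0.
have n2 : Gf (2 + q) (L ^+ 2) a b 0 \in Num.nneg.
  by rewrite nnegrE; apply: sumr_ge0 => v _; apply: powR_ge0.
exact: (hm _ _ n1 n2 hT).
Qed.
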